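(* In the infinite-color urn model with parameters $\ell,s$ and initial cumulative counts $m_1,\dots,m_s$, for any $k>s$ and any positive integer $q$: (a) $\mathbb{E}M_k(n)^q\asymp n^{q\ell/(\ell+1)}$ as $n\to\infty$, i.e. the ratio is bounded above and below by positive constants not depending on $n$; (b) $\mathbb{E}\big\{M_k(n)(M_k(n)+1)\cdots(M_k(n)+\ell)\big\}=\big(m_s+(\ell+1)(k-s)+\ell\big)\,n^\ell\left(\frac{\ell+1}{\ell}\right)^{\ell}\big(1+O(n^{-1})\big)$ as $n\to\infty$; (c) $\displaystyle\limsup_{n\to\infty}\mathbb{E}\Big(\frac{n^{\ell/(\ell+1)}}{M_k(n)}\Big)<\infty$.
   Context: Infinite-color urn model: at time $0$ the urn contains balls of colors $1,\dots,s$ (at least one of each). Fix an integer $\ell\ge1$. At the $n$th step a ball is drawn uniformly at random and returned with one additional ball of the same color; if $n$ is a multiple of $\ell$, one ball of the new color $s+n/\ell$ is added after the $n$th draw. $M_k(n)$ is the number of balls with colors in $\{1,\dots,k\}$ after step $n$ is completed, and $m_k=M_k(0)$ (with $m_1\ge1$, $m_{k+1}-m_k\ge1$ for $k<s$). *)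

(* Defs.v *)
From Stdlib Require Export Reals List Arith.
Export ListNotations.
Open Scope R_scope.

(* Urn state: a list of ball counts; index i (0-based) holds color i+1. *)

Fixpoint incr (st : list nat) (i : nat) : list nat :=
  match st, i with
  | [], _ => []
  | x :: r, O => S x :: r
  | x :: r, S j => x :: incr r j
  end.

Definition total (st : list nat) : nat := list_sum st.

(* the n-th step (n >= 1), given that the color at index i was drawn:
   return the drawn ball plus one of the same color; if l divides n,
   add one ball of a new color (appended at the end). *)
Definition urn_step (l n : nat) (st : list nat) (i : nat) : list nat :=
  let st' := incr st i in
  if Nat.eqb (Nat.modulo n l) 0 then st' ++ [1%nat] else st'.

(* expect l f t r st = expectation of f(state) after r further steps,
   starting from state st after t completed steps; a ball is drawn
   uniformly at random, i.e. color index i with probability st_i / total. *)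
Fixpoint expect (l : nat) (f : list nat -> R) (t r : nat) (st : list nat) : R :=
  match r with
  | O => f st
  | S r' =>
      fold_right Rplus 0
        (map (fun i => INR (nth i st O) / INR (total st) *
                       expect l f (S t) r' (urn_step l (S t) st i))
             (seq 0 (length st)))
  end.

Definition urnE (l : nat) (a : list nat) (n : nat) (f : list nat -> R) : R :=
  expect l f 0 n a.

Definition Mk (k : nat) (st : list nat) : nat := list_sum (firstn k st).

Definition rising (x : R) (l : nat) : R :=
  fold_right Rmult 1 (map (fun j => x + INR j) (seq 0 (S l))).

(* Main.v *)
Require Import Defs.
From Stdlib Require Import Reals List Arith Lra Lia.
Open Scope R_scope.

Definition lsum (F : nat -> R) (n : nat) : R := fold_right Rplus 0 (map F (seq 0 n)).

Lemma fold_plus_init (L : list R) (x : R) :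
  fold_right Rplus x L = fold_right Rplus 0 L + x.
Proof. induction L; simpl; [lra|rewrite IHL; lra]. Qed.

Lemma lsum_0 F : lsum F 0 = 0.
Proof. reflexivity. Qed.

Lemma lsum_S F n : lsum F (S n) = lsum F n + F n.
Proof.
  unfold lsum. rewrite seq_S, map_app, fold_right_app. simpl.
  rewrite fold_plus_init. lra.
Qed.

Lemma lsum_ext F G n : (forall i, (i < n)%nat -> F i = G i) -> lsum F n = lsum G n.
Proof.
  induction n; intros H; [reflexivity|]. rewrite !lsum_S, IHn, H; auto.
Qed.

Lemma lsum_shift F n : lsum F (S n) = F 0%nat + lsum (fun i => F (S i)) n.
Proof.
  induction n. { rewrite lsum_S, !lsum_0. lra. }
  rewrite lsum_S, IHn, lsum_S. lra.
Qed.

Lemma lsum_scal c F n : lsum (fun i => c * F i) n = c * lsum F n.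
Proof. induction n; [rewrite !lsum_0; ring|rewrite !lsum_S, IHn; ring]. Qed.

Lemma lsum_plus F G n : lsum (fun i => F i + G i) n = lsum F n + lsum G n.
Proof. induction n; [rewrite !lsum_0; ring|rewrite !lsum_S, IHn; ring]. Qed.

Lemma lsum_le F G n : (forall i, (i < n)%nat -> F i <= G i) -> lsum F n <= lsum G n.
Proof.
  induction n; intros H; [rewrite !lsum_0; lra|]. rewrite !lsum_S.
  assert (lsum F n <= lsum G n) by auto. assert (F n <= G n) by auto. lra.
Qed.

Lemma lsum_if F k n :
  lsum (fun i => if Nat.ltb i k then F i else 0) n = lsum F (Nat.min n k).
Proof.
  induction n. { simpl. rewrite !lsum_0. reflexivity. }
  rewrite lsum_S, IHn. destruct (Nat.ltb_spec n k).
  - replace (Nat.min (S n) k) with (S (Nat.min n k)) by lia.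
    replace (Nat.min n k) with n by lia. rewrite lsum_S. reflexivity.
  - replace (Nat.min (S n) k) with (Nat.min n k) by lia. ring.
Qed.

Lemma lsum_nth_total st :
  lsum (fun i => INR (nth i st O)) (length st) = INR (total st).
Proof.
  induction st. { reflexivity. }
  simpl length. rewrite lsum_shift. simpl nth. rewrite IHst.
  unfold total; simpl. rewrite plus_INR. ring.
Qed.

Lemma lsum_nth_Mk st k : (k <= length st)%nat ->
  lsum (fun i => INR (nth i st O)) k = INR (Mk k st).
Proof.
  revert k; induction st; intros k Hk.
  { simpl in Hk. replace k with 0%nat by lia. reflexivity. }
  destruct k. { reflexivity. }
  rewrite lsum_shift. simpl nth. rewrite IHst by (simpl in Hk; lia).
  unfold Mk; simpl. rewrite plus_INR. ring.
Qed.

Lemma incr_length st i : length (incr st i) = length st.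
Proof. revert i; induction st; intros [|i]; simpl; auto. Qed.

Lemma incr_total st i : (i < length st)%nat -> total (incr st i) = S (total st).
Proof.
  unfold total. revert i; induction st; intros [|i] H; simpl in *; try lia.
  rewrite IHst by lia. lia.
Qed.

Lemma incr_Mk st i k : (i < length st)%nat ->
  Mk k (incr st i) = (Mk k st + if Nat.ltb i k then 1 else 0)%nat.
Proof.
  unfold Mk. revert i k; induction st; intros [|i] [|k] H; simpl in *; try lia.
  - rewrite IHst by lia. destruct (Nat.ltb_spec i k), (Nat.ltb_spec (S i) (S k)); lia.
Qed.

Definition bump (l n : nat) : nat := if Nat.eqb (Nat.modulo n l) 0 then 1%nat else 0%nat.

Lemma step_length l n st i : length (urn_step l n st i) = (length st + bump l n)%nat.
Proof.
  unfold urn_step, bump. destruct (Nat.eqb (n mod l) 0);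
  [rewrite length_app|]; rewrite incr_length; simpl; lia.
Qed.

Lemma step_total l n st i : (i < length st)%nat ->
  total (urn_step l n st i) = (total st + 1 + bump l n)%nat.
Proof.
  intros H. unfold urn_step, bump. destruct (Nat.eqb (n mod l) 0).
  - unfold total in *. rewrite list_sum_app. fold (total (incr st i)).
    rewrite incr_total by auto. unfold total. simpl. lia.
  - rewrite incr_total by auto. lia.
Qed.

Lemma step_Mk l n st i k : (i < length st)%nat -> (k <= length st)%nat ->
  Mk k (urn_step l n st i) = (Mk k st + if Nat.ltb i k then 1 else 0)%nat.
Proof.
  intros H Hk. rewrite <- incr_Mk by auto. unfold urn_step.
  destruct (Nat.eqb (n mod l) 0); auto.
  unfold Mk. rewrite firstn_app. rewrite incr_length.
  replace (k - length st)%nat with 0%nat by lia. simpl. rewrite app_nil_r. auto.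
Qed.
Definition w (st : list nat) (i : nat) : R := INR (nth i st O) / INR (total st).

Lemma expect_S l f t r st : expect l f t (S r) st =
  lsum (fun i => w st i * expect l f (S t) r (urn_step l (S t) st i)) (length st).
Proof. reflexivity. Qed.

Lemma w_sum st : (0 < total st)%nat -> lsum (w st) (length st) = 1.
Proof.
  intros H. unfold w. unfold Rdiv.
  rewrite (lsum_ext _ (fun i => / INR (total st) * INR (nth i st O))) by (intros; ring).
  rewrite lsum_scal, lsum_nth_total. field. apply not_0_INR. lia.
Qed.

Lemma w_Mk st k : (0 < total st)%nat -> (k <= length st)%nat ->
  lsum (w st) k = INR (Mk k st) / INR (total st).
Proof.
  intros H Hk. unfold w. unfold Rdiv.
  rewrite (lsum_ext _ (fun i => / INR (total st) * INR (nth i st O))) by (intros; ring).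
  rewrite lsum_scal, lsum_nth_Mk by auto. ring.
Qed.

Lemma w_nonneg st i : (0 < total st)%nat -> 0 <= w st i.
Proof.
  intros H. unfold w. apply Rmult_le_pos. apply pos_INR.
  left. apply Rinv_0_lt_compat. apply lt_0_INR. lia.
Qed.

Definition Pres (l : nat) (P : nat -> list nat -> Prop) : Prop :=
  (forall t st i, P t st -> (i < length st)%nat -> P (S t) (urn_step l (S t) st i)) /\
  (forall t st, P t st -> (0 < total st)%nat).

Lemma expect_const l P f r V : Pres l P -> forall j t st, P t st ->
  (forall st', P (t + j)%nat st' -> expect l f (t + j) r st' = V) ->
  expect l f t (j + r) st = V.
Proof.
  intros [HP1 HP2]. induction j; intros t st Ht HV.
  { rewrite Nat.add_0_r in HV. simpl. auto. }
  simpl plus. rewrite expect_S.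
  rewrite (lsum_ext _ (fun i => V * w st i)).
  - rewrite lsum_scal, w_sum by eauto. ring.
  - intros i Hi. rewrite (IHj (S t)); [ring|auto|].
    intros st' H'. replace (S t + j)%nat with (t + S j)%nat in * by lia. auto.
Qed.

Lemma expect_lin l P F a b : Pres l P -> forall r t st, P t st ->
  expect l (fun x => a + b * F x) t r st = a + b * expect l F t r st.
Proof.
  intros [HP1 HP2]. induction r; intros t st Ht. { reflexivity. }
  rewrite !expect_S.
  rewrite (lsum_ext _ (fun i => a * w st i + b * (w st i * expect l F (S t) r (urn_step l (S t) st i)))).
  - rewrite lsum_plus, !lsum_scal, w_sum by eauto. ring.
  - intros i Hi. rewrite IHr by auto. ring.
Qed.

Lemma expect_mono l P F G : Pres l P -> forall r t st, P t st ->
  (forall st', P (t + r)%nat st' -> F st' <= G st') ->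
  expect l F t r st <= expect l G t r st.
Proof.
  intros [HP1 HP2]. induction r; intros t st Ht HFG.
  { simpl. apply HFG. rewrite Nat.add_0_r. auto. }
  rewrite !expect_S. apply lsum_le. intros i Hi.
  apply Rmult_le_compat_l. apply w_nonneg; eauto.
  apply IHr; auto. intros st' H'. apply HFG. replace (t + S r)%nat with (S t + r)%nat by lia. auto.
Qed.

Lemma expect_eigen l P k (g : nat -> R) (Phi : nat -> R) (t0 : nat) : Pres l P ->
  (forall t, (t0 <= t)%nat -> Phi t <> 0) ->
  (forall t st, (t0 <= t)%nat -> P t st -> (k <= length st)%nat) ->
  (forall t st, (t0 <= t)%nat -> P t st ->
     INR (Mk k st) * g (S (Mk k st)) + (INR (total st) - INR (Mk k st)) * g (Mk k st)
     = INR (total st) * (Phi (S t) / Phi t) * g (Mk k st)) ->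
  forall r t st, (t0 <= t)%nat -> P t st ->
  expect l (fun x => g (Mk k x)) t r st = Phi (t + r)%nat / Phi t * g (Mk k st).
Proof.
  intros [HP1 HP2] HPhi Hk HH. induction r; intros t st Ht HPt.
  { simpl. rewrite Nat.add_0_r. field. auto. }
  rewrite expect_S.
  pose proof (HP2 _ _ HPt) as Htot. pose proof (Hk _ _ Ht HPt) as Hkl.
  set (M := Mk k st).
  rewrite (lsum_ext _ (fun i => (Phi (S t + r)%nat / Phi (S t)) *
     (g M * w st i + (if Nat.ltb i k then (g (S M) - g M) * w st i else 0)))).
  - rewrite lsum_scal, lsum_plus, lsum_scal.
    rewrite lsum_if, lsum_scal, w_sum by auto.
    replace (Nat.min (length st) k) with k by lia. rewrite w_Mk by auto.
    fold M. pose proof (HH t st Ht HPt) as E. fold M in E.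
    replace (t + S r)%nat with (S t + r)%nat by lia.
    assert (HT : INR (total st) <> 0) by (apply not_0_INR; lia).
    assert (HP0 : Phi t <> 0) by auto. assert (HP1' : Phi (S t) <> 0) by (apply HPhi; lia).
    apply (Rmult_eq_reg_l (INR (total st))); auto.
    transitivity (Phi (S t + r)%nat / Phi (S t) * (INR M * g (S M) + (INR (total st) - INR M) * g M)).
    + field. auto.
    + rewrite E. field. auto.
  - intros i Hi. rewrite IHr by (auto; lia).
    rewrite step_Mk by auto. fold M.
    destruct (Nat.ltb i k); simpl; [rewrite Nat.add_1_r|rewrite Nat.add_0_r]; ring.
Qed.
Lemma succ_div l t : (1 <= l)%nat ->
  (bump l (S t) = 1 /\ S t / l = t / l + 1 /\ t mod l = l - 1)%nat \/
  (bump l (S t) = 0 /\ S t / l = t / l /\ S t mod l = t mod l + 1)%nat.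
Proof.
  intros Hl. pose proof (Nat.div_mod t l ltac:(lia)) as E.
  pose proof (Nat.mod_upper_bound t l ltac:(lia)) as B.
  unfold bump.
  destruct (Nat.eq_dec (t mod l + 1) l) as [Heq|Hne].
  - left. assert (H1 : (0 = S t mod l)%nat) by (apply (Nat.mod_unique _ _ (t / l + 1)); lia).
    assert (H2 : (t / l + 1 = S t / l)%nat) by (apply (Nat.div_unique _ _ _ 0); lia).
    rewrite <- H1. simpl. lia.
  - right. assert (H1 : (t mod l + 1 = S t mod l)%nat) by (apply (Nat.mod_unique _ _ (t / l)); lia).
    assert (H2 : (t / l = S t / l)%nat) by (apply (Nat.div_unique _ _ _ (t mod l + 1)); lia).
    rewrite <- H1. destruct (Nat.eqb_spec (t mod l + 1) 0); lia.
Qed.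

Definition Inv (l : nat) (a : list nat) (k t : nat) (st : list nat) : Prop :=
  total st = (total a + t + t / l)%nat /\ length st = (length a + t / l)%nat /\
  ((k - length a) * l <= t -> total a + S l * (k - length a) <= Mk k st)%nat.

Lemma Inv_len l a k t st : (1 <= l)%nat -> ((k - length a) * l <= t)%nat -> Inv l a k t st ->
  (k <= length st)%nat.
Proof.
  intros Hl Ht [_ [H2 _]]. rewrite H2.
  pose proof (Nat.Div0.div_le_mono _ _ l Ht). rewrite Nat.div_mul in H by lia. lia.
Qed.

Lemma Inv_Pres l a k : (1 <= l)%nat -> (1 <= total a)%nat -> (length a < k)%nat -> Pres l (Inv l a k).
Proof.
  intros Hl Ha Hk. split.
  - intros t st i [H1 [H2 H3]] Hi.
    pose proof (succ_div l t Hl) as D.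
    split; [|split].
    + rewrite step_total by auto. destruct D as [[D1 [D2 _]]|[D1 [D2 _]]]; rewrite D1, D2; lia.
    + rewrite step_length. destruct D as [[D1 [D2 _]]|[D1 [D2 _]]]; rewrite D1, D2; lia.
    + intros Ht. destruct (Nat.eq_dec ((k - length a) * l) (S t)) as [E|E].
      * assert (Hlen : length (urn_step l (S t) st i) = k).
        { rewrite step_length. assert (length (urn_step l (S t) st i) = length a + S t / l)%nat.
          { rewrite step_length. destruct D as [[D1 [D2 _]]|[D1 [D2 _]]]; rewrite D1, D2; lia. }
          rewrite step_length in H. rewrite H, <- E, Nat.div_mul by lia. lia. }
        unfold Mk. rewrite firstn_all2 by lia. fold (total (urn_step l (S t) st i)).
        rewrite step_total by auto.
        assert (HH : (total st + 1 + bump l (S t) = total a + S t + S t / l)%nat).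
        { destruct D as [[D1 [D2 _]]|[D1 [D2 _]]]; rewrite D1, D2; lia. }
        rewrite HH, <- E, Nat.div_mul by lia. nia.
      * assert (Hkl : (k <= length st)%nat) by (apply (Inv_len l a k t); auto; [lia|split; auto]).
        rewrite step_Mk by auto. specialize (H3 ltac:(lia)). lia.
  - intros t st [H1 _]. lia.
Qed.

Lemma Inv_0 l a k : (1 <= l)%nat -> (length a < k)%nat -> Inv l a k 0 a.
Proof.
  intros Hl Hk. split; [|split].
  - rewrite Nat.Div0.div_0_l. lia.
  - rewrite Nat.Div0.div_0_l. lia.
  - intros H. nia.
Qed.

Lemma Inv_n0 l a k st : (1 <= l)%nat -> (length a < k)%nat ->
  Inv l a k ((k - length a) * l) st -> Mk k st = (total a + S l * (k - length a))%nat.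
Proof.
  intros Hl Hk [H1 [H2 _]]. rewrite Nat.div_mul in H1, H2 by lia.
  unfold Mk. rewrite firstn_all2 by lia. fold (total st). rewrite H1. nia.
Qed.
Definition Tn (l : nat) (a : list nat) (t : nat) : R := INR (total a + t + t / l).

Fixpoint Phi (c : R) (l : nat) (a : list nat) (n0 t : nat) : R :=
  match t with
  | O => 1
  | S t' => Phi c l a n0 t' * (if Nat.leb n0 t' then (Tn l a t' + c) / Tn l a t' else 1)
  end.

Lemma Tn_pos l a t : (1 <= total a)%nat -> 0 < Tn l a t.
Proof. intros H. unfold Tn. apply lt_0_INR. lia. Qed.

Lemma Tn_ge l a t : (INR t + 1 <= Tn l a t)%R \/ (total a = 0)%nat.
Proof.
  destruct (total a) eqn:E; [right; auto|left]. unfold Tn. rewrite E.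
  rewrite <- S_INR. apply le_INR. lia.
Qed.

Lemma Phi_pos c l a n0 : (1 <= total a)%nat -> (forall t, (n0 <= t)%nat -> 0 < Tn l a t + c) ->
  forall t, 0 < Phi c l a n0 t.
Proof.
  intros Ha Hc. induction t; simpl. lra.
  apply Rmult_lt_0_compat; auto. destruct (Nat.leb_spec n0 t); [|lra].
  apply Rdiv_lt_0_compat; auto. apply Tn_pos; auto.
Qed.

Lemma Phi_before c l a n0 t : (t <= n0)%nat -> Phi c l a n0 t = 1.
Proof.
  induction t; intros H; simpl; auto. rewrite IHt by lia.
  destruct (Nat.leb_spec n0 t); [lia|ring].
Qed.

Lemma Phi_S c l a n0 t : (n0 <= t)%nat ->
  Phi c l a n0 (S t) = Phi c l a n0 t * ((Tn l a t + c) / Tn l a t).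
Proof. intros H. simpl. destruct (Nat.leb_spec n0 t); [auto|lia]. Qed.

Lemma urn_eigen l a k (g : nat -> R) (c : R) :
  (1 <= l)%nat -> (1 <= total a)%nat -> (length a < k)%nat ->
  (forall t, ((k - length a) * l <= t)%nat -> 0 < Tn l a t + c) ->
  (forall (T : R) (M : nat), 0 < T -> (total a + S l * (k - length a) <= M)%nat ->
     INR M * g (S M) + (T - INR M) * g M = (T + c) * g M) ->
  forall n, ((k - length a) * l <= n)%nat ->
  urnE l a n (fun st => g (Mk k st)) =
    Phi c l a ((k - length a) * l) n * g (total a + S l * (k - length a))%nat.
Proof.
  intros Hl Ha Hk Hc HH n Hn.
  set (n0 := ((k - length a) * l)%nat) in *.
  replace n with (n0 + (n - n0))%nat by lia. set (r := (n - n0)%nat).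
  unfold urnE.
  pose proof (Inv_Pres l a k Hl Ha Hk) as HP.
  assert (HPhi : forall t, Phi c l a n0 t <> 0).
  { intros t. apply Rgt_not_eq. apply Phi_pos; auto. }
  apply (expect_const l (Inv l a k) _ r _ HP n0 0 a (Inv_0 l a k Hl Hk)).
  intros st' Hst'. simpl plus in Hst' |- *.
  rewrite (expect_eigen l (Inv l a k) k g (Phi c l a n0) n0 HP).
  - rewrite (Inv_n0 l a k st' Hl Hk Hst'). rewrite (Phi_before c l a n0 n0) by lia. simpl. rewrite Rdiv_1_r. reflexivity.
  - auto.
  - intros t st Ht Hst. apply (Inv_len l a k t); auto.
  - intros t st Ht Hst. rewrite Phi_S by auto.
    destruct Hst as [H1 [H2 H3]].
    assert (ET : INR (total st) = Tn l a t) by (unfold Tn; rewrite H1; auto).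
    rewrite ET. rewrite HH; [|apply Tn_pos; auto|auto].
    field. split; auto. apply Rgt_not_eq, Tn_pos; auto.
  - lia.
  - auto.
Qed.
Lemma fold_mult_app (L : list R) (y : R) :
  fold_right Rmult 1 (L ++ [y]) = fold_right Rmult 1 L * y.
Proof. induction L; simpl; [ring|rewrite IHL; ring]. Qed.

Lemma rising_0 x : rising x 0 = x.
Proof. unfold rising. simpl. ring. Qed.

Lemma rising_S x p : rising x (S p) = rising x p * (x + INR (S p)).
Proof.
  unfold rising. rewrite (seq_S (S p) 0), map_app. cbn [map]. rewrite fold_mult_app. reflexivity.
Qed.

Lemma rising_shift x p : rising (x + 1) p * x = rising x p * (x + INR p + 1).
Proof.
  induction p.
  - rewrite !rising_0. simpl. ring.
  - rewrite !rising_S. rewrite S_INR.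
    replace (rising (x + 1) p * (x + 1 + (INR p + 1)) * x) with
      (rising (x + 1) p * x * (x + 1 + (INR p + 1))) by ring.
    rewrite IHp. ring.
Qed.

Lemma rising_bounds x p : 0 <= x -> x ^ (S p) <= rising x p <= (x + INR p) ^ (S p).
Proof.
  intros Hx. induction p.
  - rewrite rising_0. simpl. lra.
  - rewrite rising_S. destruct IHp as [IH1 IH2]. split.
    + replace (x ^ S (S p)) with (x ^ (S p) * x) by (simpl; ring).
      apply Rmult_le_compat; auto. apply pow_le; auto.
      pose proof (pos_INR (S p)). lra.
    + replace ((x + INR (S p)) ^ S (S p)) with ((x + INR (S p)) ^ (S p) * (x + INR (S p))) by (simpl; ring).
      apply Rmult_le_compat.
      * pose proof (pow_le x (S p) Hx). lra.
      * pose proof (pos_INR (S p)). lra.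
      * apply (Rle_trans _ _ _ IH2). apply pow_incr. split.
        pose proof (pos_INR p); lra. rewrite S_INR; lra.
      * lra.
Qed.

Lemma rising_pos x p : 0 < x -> 0 < rising x p.
Proof.
  intros Hx. pose proof (rising_bounds x p ltac:(lra)) as [H _].
  pose proof (pow_lt x (S p) Hx). lra.
Qed.

Definition G (l : nat) (a : list nat) (n : nat) : R :=
  rising (Tn l a n) l / (Tn l a n + INR l - INR (n mod l)).

Lemma G_den_pos l a n : (1 <= l)%nat -> (1 <= total a)%nat ->
  Tn l a n + 1 <= Tn l a n + INR l - INR (n mod l).
Proof.
  intros Hl Ha. pose proof (Nat.mod_upper_bound n l ltac:(lia)).
  assert (INR (n mod l) + 1 <= INR l).
  { rewrite <- S_INR. apply le_INR. lia. }
  lra.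
Qed.

Lemma G_rec l a n : (1 <= l)%nat -> (1 <= total a)%nat ->
  G l a (S n) * Tn l a n = G l a n * (Tn l a n + INR l + 1).
Proof.
  intros Hl Ha. unfold G.
  pose proof (Tn_pos l a n Ha) as HT.
  pose proof (G_den_pos l a n Hl Ha) as HD.
  pose proof (G_den_pos l a (S n) Hl Ha) as HD'.
  set (T := Tn l a n) in *.
  destruct (succ_div l n Hl) as [[D1 [D2 D3]]|[D1 [D2 D3]]].
  - unfold bump in D1. destruct (Nat.eqb_spec (S n mod l) 0) as [Hm|]; [|discriminate].
    assert (E : Tn l a (S n) = T + 2).
    { unfold T, Tn. rewrite D2. replace (total a + S n + (n / l + 1))%nat with (total a + n + n/l + 2)%nat by lia.
      rewrite plus_INR. simpl. ring. }
    rewrite E in *. rewrite Hm, D3 in *. rewrite minus_INR in * by lia. simpl INR in *.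
    pose proof (rising_shift T l) as R1. pose proof (rising_shift (T + 1) l) as R2.
    replace (T + 1 + 1) with (T + 2) in R2 by ring.
    assert (0 < rising (T + 1) l) by (apply rising_pos; lra).
    assert (0 < rising T l) by (apply rising_pos; lra).
    assert (E1 : rising (T + 1) l = rising T l * (T + INR l + 1) / T).
    { apply (Rmult_eq_reg_r T); [|lra]. rewrite R1. field. lra. }
    assert (E2 : rising (T + 2) l = rising (T + 1) l * (T + 1 + INR l + 1) / (T + 1)).
    { apply (Rmult_eq_reg_r (T + 1)); [|lra]. rewrite R2. field. lra. }
    rewrite E2, E1. field. repeat split; try lra.
  - assert (E : Tn l a (S n) = T + 1).
    { unfold T, Tn. rewrite D2. replace (total a + S n + n / l)%nat with (total a + n + n/l + 1)%nat by lia.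
      rewrite plus_INR. simpl. ring. }
    rewrite E in *. rewrite D3 in *. rewrite plus_INR in *. simpl INR in *.
    pose proof (rising_shift T l) as R1.
    assert (E1 : rising (T + 1) l = rising T l * (T + INR l + 1) / T).
    { apply (Rmult_eq_reg_r T); [|lra]. rewrite R1. field. lra. }
    rewrite E1. field. split; lra.
Qed.
Lemma bern_low (y : R) (p : nat) : 0 <= y <= 1 -> 1 - INR p * y <= (1 - y) ^ p.
Proof.
  intros Hy. induction p. { simpl. lra. }
  rewrite S_INR. simpl pow.
  assert (0 <= (1 - y) ^ p) by (apply pow_le; lra).
  assert (0 <= INR p) by apply pos_INR. nra.
Qed.

Lemma bern (y : R) (p : nat) : 0 <= y -> 1 + INR p * y <= (1 + y) ^ p.
Proof.
  intros Hy. induction p. { simpl. lra. }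
  rewrite S_INR. simpl pow.
  assert (0 <= INR p) by apply pos_INR. nra.
Qed.

Lemma bern_up (y : R) (p : nat) : 0 <= y <= 1 -> (1 + y) ^ p <= 1 + (2 ^ p - 1) * y.
Proof.
  intros Hy. induction p. { simpl. lra. }
  simpl pow. assert (1 <= 2 ^ p) by (apply pow_R1_Rle; lra).
  assert (0 <= (1 + y) ^ p) by (apply pow_le; lra).
  assert (0 <= (2 ^ p - 1) * y * (1 - y)) by (apply Rmult_le_pos; [apply Rmult_le_pos|]; lra).
  assert ((1 + y) * (1 + y) ^ p <= (1 + y) * (1 + (2 ^ p - 1) * y)) by (apply Rmult_le_compat_l; lra).
  nra.
Qed.

Lemma ratio_bounds (T D u K : R) (l : nat) :
  1 <= u -> u - 1 <= T -> T + INR l <= u + K -> INR l <= K -> 1 <= K -> K <= u ->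
  T + 1 <= D <= T + INR l -> (1 <= l)%nat ->
  u ^ l * (1 - K / u) ^ (S l) <= rising T l / D <= u ^ l * (1 + K / u) ^ (S l).
Proof.
  intros H1 H2 H3 H4 H5 H6 [H7 H8] Hl.
  assert (HT : 0 <= T) by lra.
  assert (HL : 1 <= INR l) by (apply (le_INR 1); lia).
  pose proof (rising_bounds T l HT) as [R1 R2].
  assert (HD : 0 < D) by lra.
  assert (HKu : 0 <= K / u <= 1).
  { split. unfold Rdiv; apply Rmult_le_pos; [lra|left; apply Rinv_0_lt_compat; lra].
    apply (Rmult_le_reg_r u); [lra|]. unfold Rdiv. rewrite Rmult_assoc, Rinv_l by lra. lra. }
  split.
  - assert (Ea : u ^ l * (1 - K / u) ^ S l = (u - K) ^ l * (1 - K / u)).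
    { replace (u - K) with (u * (1 - K / u)) by (field; lra).
      rewrite Rpow_mult_distr. simpl pow. ring. }
    rewrite Ea.
    apply Rle_trans with (T ^ S l / (T + INR l)).
    + replace (T ^ S l / (T + INR l)) with (T ^ l * (T / (T + INR l))) by (simpl pow; field; lra).
      apply Rmult_le_compat.
      * apply pow_le. lra.
      * lra.
      * apply pow_incr. lra.
      * replace (T / (T + INR l)) with (1 - INR l / (T + INR l)) by (field; lra).
        assert (INR l / (T + INR l) <= K / u).
        { apply Rle_trans with (INR l / u).
          - unfold Rdiv. apply Rmult_le_compat_l; [lra|]. apply Rinv_le_contravar; lra.
          - unfold Rdiv. apply Rmult_le_compat_r; [left; apply Rinv_0_lt_compat; lra|lra]. }
        lra.
    + unfold Rdiv. apply Rmult_le_compat; auto.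
      * apply pow_le. lra.
      * left. apply Rinv_0_lt_compat. lra.
      * apply Rinv_le_contravar; lra.
  - assert (Eb : u ^ l * (1 + K / u) ^ S l = (u + K) ^ S l / u).
    { replace (u + K) with (u * (1 + K / u)) by (field; lra).
      rewrite Rpow_mult_distr. simpl pow. field. lra. }
    rewrite Eb.
    unfold Rdiv. apply Rmult_le_compat.
    + apply Rle_trans with (T ^ S l); [apply pow_le; lra|auto].
    + left. apply Rinv_0_lt_compat. lra.
    + apply Rle_trans with ((T + INR l) ^ S l); auto. apply pow_incr. lra.
    + apply Rinv_le_contravar; lra.
Qed.
Lemma n0_ge1 (l : nat) (a : list nat) (k : nat) : (1 <= l)%nat -> (length a < k)%nat -> (1 <= (k - length a) * l)%nat.
Proof. intros. nia. Qed.

Lemma Tn_c (l : nat) (a : list nat) (k : nat) c t : (1 <= l)%nat -> (1 <= total a)%nat -> (length a < k)%nat ->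
  -1 <= c -> ((k - length a) * l <= t)%nat -> 0 < Tn l a t + c.
Proof.
  intros Hl Ha Hk Hc Ht. destruct (Tn_ge l a t) as [H|H]; [|lia].
  pose proof (n0_ge1 l a k Hl Hk). assert (1 <= INR t) by (apply (le_INR 1); lia). lra.
Qed.

Lemma E_rising (l : nat) (a : list nat) (k : nat) p n : (1 <= l)%nat -> (1 <= total a)%nat -> (length a < k)%nat ->
  ((k - length a) * l <= n)%nat ->
  urnE l a n (fun st => rising (INR (Mk k st)) p) =
  Phi (INR p + 1) l a ((k - length a) * l) n * rising (INR (total a + S l * (k - length a))) p.
Proof.
  intros Hl Ha Hk Hn.
  apply (urn_eigen l a k (fun M => rising (INR M) p) (INR p + 1)); auto.
  - intros t Ht. apply (Tn_c l a k); auto. pose proof (pos_INR p); lra.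
  - intros T M HT HM. rewrite S_INR. rewrite (Rmult_comm (INR M)). rewrite rising_shift. ring.
Qed.

Lemma E_M (l : nat) (a : list nat) (k : nat) n : (1 <= l)%nat -> (1 <= total a)%nat -> (length a < k)%nat ->
  ((k - length a) * l <= n)%nat ->
  urnE l a n (fun st => INR (Mk k st)) =
  Phi 1 l a ((k - length a) * l) n * INR (total a + S l * (k - length a)).
Proof.
  intros Hl Ha Hk Hn.
  apply (urn_eigen l a k (fun M => INR M) 1); auto.
  - intros t Ht. apply (Tn_c l a k); auto. lra.
  - intros T M HT HM. rewrite S_INR. ring.
Qed.

Lemma E_inv (l : nat) (a : list nat) (k : nat) n : (1 <= l)%nat -> (1 <= total a)%nat -> (length a < k)%nat ->
  ((k - length a) * l <= n)%nat ->
  urnE l a n (fun st => / (INR (Mk k st) - 1)) =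
  Phi (-1) l a ((k - length a) * l) n * / (INR (total a + S l * (k - length a)) - 1).
Proof.
  intros Hl Ha Hk Hn.
  apply (urn_eigen l a k (fun M => / (INR M - 1)) (-1)); auto.
  - intros t Ht. apply (Tn_c l a k); auto. lra.
  - intros T M HT HM. assert (2 <= INR M) by (apply (le_INR 2); nia).
    rewrite S_INR. field. lra.
Qed.

Lemma Phi_G (l : nat) (a : list nat) (k : nat) n : (1 <= l)%nat -> (1 <= total a)%nat -> (length a < k)%nat ->
  ((k - length a) * l <= n)%nat ->
  Phi (INR l + 1) l a ((k - length a) * l) n * G l a ((k - length a) * l) = G l a n.
Proof.
  intros Hl Ha Hk Hn. set (n0 := ((k - length a) * l)%nat) in *.
  replace n with (n0 + (n - n0))%nat by lia. generalize (n - n0)%nat as d.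
  induction d.
  - rewrite Nat.add_0_r. rewrite Phi_before by lia. ring.
  - replace (n0 + S d)%nat with (S (n0 + d)) by lia.
    rewrite Phi_S by lia.
    pose proof (G_rec l a (n0 + d) Hl Ha) as R.
    pose proof (Tn_pos l a (n0 + d) Ha) as HT.
    apply (Rmult_eq_reg_r (Tn l a (n0 + d))); [|lra].
    rewrite R, <- IHd. field. lra.
Qed.

Lemma G_n0 (l : nat) (a : list nat) (k : nat) : (1 <= l)%nat -> (length a < k)%nat ->
  G l a ((k - length a) * l) =
  rising (INR (total a + S l * (k - length a))) l / (INR (total a + S l * (k - length a)) + INR l).
Proof.
  intros Hl Hk. unfold G, Tn.
  rewrite Nat.div_mul by lia. rewrite Nat.Div0.mod_mul.
  replace (total a + (k - length a) * l + (k - length a))%nat with (total a + S l * (k - length a))%nat by nia.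
  rewrite Rminus_0_r. reflexivity.
Qed.

Lemma E_rising_l (l : nat) (a : list nat) (k : nat) n : (1 <= l)%nat -> (1 <= total a)%nat -> (length a < k)%nat ->
  ((k - length a) * l <= n)%nat ->
  urnE l a n (fun st => rising (INR (Mk k st)) l) =
  INR (total a + S l * (k - length a) + l) * G l a n.
Proof.
  intros Hl Ha Hk Hn. rewrite E_rising by auto.
  rewrite <- (Phi_G l a k n) by auto. rewrite G_n0 by auto.
  set (A := INR (total a + S l * (k - length a))).
  assert (0 < A). { unfold A; apply lt_0_INR. clear A. nia. }
  assert (0 < rising A l) by (apply rising_pos; auto).
  rewrite plus_INR. fold A. field. pose proof (pos_INR l). lra.
Qed.
Lemma div_facts (n l : nat) : (1 <= l)%nat ->
  INR n * (INR (S l) / INR l) = INR n + INR (n / l) + INR (n mod l) / INR l /\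
  0 <= INR (n mod l) / INR l < 1.
Proof.
  intros Hl. pose proof (Nat.div_mod n l ltac:(lia)) as E.
  pose proof (Nat.mod_upper_bound n l ltac:(lia)) as B.
  assert (HL : 1 <= INR l) by (apply (le_INR 1); lia).
  assert (ER : INR n = INR l * INR (n / l) + INR (n mod l)).
  { rewrite E at 1. rewrite plus_INR, mult_INR. reflexivity. }
  assert (Hr : INR (n mod l) < INR l) by (apply lt_INR; auto).
  pose proof (pos_INR (n mod l)).
  split.
  - rewrite S_INR. rewrite ER. field. lra.
  - split.
    + unfold Rdiv. apply Rmult_le_pos; [lra|left; apply Rinv_0_lt_compat; lra].
    + apply (Rmult_lt_reg_r (INR l)); [lra|]. unfold Rdiv. rewrite Rmult_assoc, Rinv_l by lra. lra.
Qed.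

Lemma G_asym (l : nat) (a : list nat) : (1 <= l)%nat -> (1 <= total a)%nat ->
  exists C, 0 <= C /\ forall n, (total a + l <= n)%nat ->
    exists r, Rabs r <= C / INR n /\
      G l a n = (INR n * (INR (S l) / INR l)) ^ l * (1 + r).
Proof.
  intros Hl Ha.
  set (K := INR (total a) + INR l).
  exists ((2 ^ (S l) + INR (S l)) * K). split.
  { apply Rmult_le_pos. pose proof (pos_INR (S l)). pose proof (pow_le 2 (S l) ltac:(lra)). lra.
    unfold K. pose proof (pos_INR (total a)). pose proof (pos_INR l). lra. }
  intros n Hn.
  set (u := INR n * (INR (S l) / INR l)).
  destruct (div_facts n l Hl) as [Eu Hr]. fold u in Eu.
  assert (HL : 1 <= INR l) by (apply (le_INR 1); lia).
  assert (HA : 1 <= INR (total a)) by (apply (le_INR 1); lia).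
  assert (HKn : K <= INR n) by (unfold K; rewrite <- plus_INR; apply le_INR; lia).
  assert (HK1 : 2 <= K) by (unfold K; lra).
  assert (Hu : INR n <= u) by (rewrite Eu; pose proof (pos_INR (n / l)); lra).
  assert (HTn : Tn l a n = INR (total a) + INR n + INR (n / l)) by (unfold Tn; rewrite !plus_INR; ring).
  pose proof (G_den_pos l a n Hl Ha) as HD1.
  assert (HD2 : Tn l a n + INR l - INR (n mod l) <= Tn l a n + INR l) by (pose proof (pos_INR (n mod l)); lra).
  pose proof (ratio_bounds (Tn l a n) (Tn l a n + INR l - INR (n mod l)) u K l
     ltac:(lra) ltac:(rewrite HTn; lra) ltac:(rewrite HTn; unfold K; lra) ltac:(unfold K; lra)
     ltac:(unfold K; lra) ltac:(lra) (conj HD1 HD2) Hl) as [B1 B2].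
  fold (G l a n) in B1, B2.
  assert (Hul : 0 < u ^ l) by (apply pow_lt; lra).
  set (y := K / u) in *.
  assert (Hy : 0 <= y <= 1).
  { unfold y. split. unfold Rdiv. apply Rmult_le_pos; [unfold K; lra|left; apply Rinv_0_lt_compat; lra].
    apply (Rmult_le_reg_r u); [lra|]. unfold Rdiv. rewrite Rmult_assoc, Rinv_l by lra. lra. }
  assert (Hyn : y <= K / INR n).
  { unfold y, Rdiv. apply Rmult_le_compat_l; [unfold K; lra|]. apply Rinv_le_contravar; lra. }
  pose proof (bern_low y (S l) Hy). pose proof (bern_up y (S l) Hy).
  exists (G l a n / u ^ l - 1). split.
  - assert (L1 : u ^ l * (1 - INR (S l) * y) <= G l a n).
    { apply Rle_trans with (u ^ l * (1 - y) ^ S l); auto. apply Rmult_le_compat_l; lra. }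
    assert (L2 : G l a n <= u ^ l * (1 + (2 ^ S l - 1) * y)).
    { apply Rle_trans with (u ^ l * (1 + y) ^ S l); auto. apply Rmult_le_compat_l; lra. }
    assert (L3 : 1 - INR (S l) * y <= G l a n / u ^ l <= 1 + (2 ^ S l - 1) * y).
    { split.
      - replace (1 - INR (S l) * y) with (u ^ l * (1 - INR (S l) * y) / u ^ l) by (field; lra).
        apply Rmult_le_compat_r; [left; apply Rinv_0_lt_compat; lra|lra].
      - replace (1 + (2 ^ S l - 1) * y) with (u ^ l * (1 + (2 ^ S l - 1) * y) / u ^ l) by (field; lra).
        apply Rmult_le_compat_r; [left; apply Rinv_0_lt_compat; lra|lra]. }
    replace ((2 ^ S l + INR (S l)) * K / INR n) with ((2 ^ S l + INR (S l)) * (K / INR n)) by (unfold Rdiv; ring).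
    pose proof (pos_INR (S l)). pose proof (pow_le 2 (S l) ltac:(lra)).
    assert (Hc : 0 <= 2 ^ S l + INR (S l)) by lra.
    assert ((2 ^ S l + INR (S l)) * y <= (2 ^ S l + INR (S l)) * (K / INR n)) by (apply Rmult_le_compat_l; auto).
    apply Rabs_le. split; nra.
  - field. lra.
Qed.
Lemma Phi_pow (l : nat) (a : list nat) (n0 p : nat) : (1 <= total a)%nat ->
  forall n, Phi (INR p + 1) l a n0 n <= Phi 1 l a n0 n ^ (S p).
Proof.
  intros Ha. induction n. { simpl. rewrite pow1. lra. }
  simpl Phi. rewrite Rpow_mult_distr.
  assert (H0 : 0 <= Phi (INR p + 1) l a n0 n).
  { left. apply Phi_pos; auto. intros. pose proof (Tn_pos l a t Ha). pose proof (pos_INR p). lra. }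
  apply Rmult_le_compat; auto.
  - destruct (Nat.leb n0 n); [|lra]. pose proof (Tn_pos l a n Ha). pose proof (pos_INR p).
    unfold Rdiv; apply Rmult_le_pos; [lra|left; apply Rinv_0_lt_compat; lra].
  - destruct (Nat.leb n0 n); [|rewrite pow1; lra].
    pose proof (Tn_pos l a n Ha) as HT.
    replace ((Tn l a n + 1) / Tn l a n) with (1 + / Tn l a n) by (field; lra).
    replace ((Tn l a n + (INR p + 1)) / Tn l a n) with (1 + INR (S p) * / Tn l a n) by (rewrite S_INR; field; lra).
    apply bern. left. apply Rinv_0_lt_compat. auto.
Qed.

Lemma Phi_inv (l : nat) (a : list nat) (k : nat) : (1 <= l)%nat -> (1 <= total a)%nat -> (length a < k)%nat ->
  forall n, Phi (-1) l a ((k - length a) * l) n * Phi 1 l a ((k - length a) * l) n <= 1.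
Proof.
  intros Hl Ha Hk. induction n. { simpl. lra. }
  simpl Phi.
  assert (H0 : 0 < Phi (-1) l a ((k - length a) * l) n).
  { apply Phi_pos; auto. intros. apply (Tn_c l a k); auto; lra. }
  assert (H1 : 0 < Phi 1 l a ((k - length a) * l) n).
  { apply Phi_pos; auto. intros. pose proof (Tn_pos l a t Ha). lra. }
  destruct (Nat.leb_spec ((k - length a) * l) n) as [Hn|Hn]; [|lra].
  pose proof (Tn_c l a k (-1) n Hl Ha Hk ltac:(lra) Hn) as HT.
  replace (Phi (-1) l a ((k - length a) * l) n * ((Tn l a n + -1) / Tn l a n) *
    (Phi 1 l a ((k - length a) * l) n * ((Tn l a n + 1) / Tn l a n))) with
    ((Phi (-1) l a ((k - length a) * l) n * Phi 1 l a ((k - length a) * l) n) *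
     (1 - / (Tn l a n * Tn l a n))) by (field; lra).
  assert (0 < / (Tn l a n * Tn l a n)) by (apply Rinv_0_lt_compat; nra).
  assert (0 <= Phi (-1) l a ((k - length a) * l) n * Phi 1 l a ((k - length a) * l) n) by nra.
  nra.
Qed.

Lemma tangent (mu y : R) (j : nat) : 0 <= mu -> 0 <= y ->
  mu ^ (S j) + INR (S j) * mu ^ j * (y - mu) <= y ^ (S j).
Proof.
  intros Hm Hy. induction j. { simpl. lra. }
  set (p := mu ^ j) in *.
  assert (Hp : 0 <= p) by (apply pow_le; auto).
  replace (mu ^ S (S j)) with (mu * mu * p) by (unfold p; simpl; ring).
  replace (mu ^ S j) with (mu * p) in * by (unfold p; simpl; ring).
  replace (y ^ S (S j)) with (y * y ^ S j) by (simpl; ring).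
  rewrite !S_INR in *.
  assert (y * (mu * p + (INR j + 1) * p * (y - mu)) <= y * y ^ S j) by (apply Rmult_le_compat_l; auto).
  assert (0 <= (INR j + 1) * p * ((y - mu) * (y - mu))).
  { pose proof (Rle_0_sqr (y - mu)). unfold Rsqr in *. pose proof (pos_INR j).
    apply Rmult_le_pos; [apply Rmult_le_pos|]; lra. }
  nra.
Qed.

Lemma root_lower (x z : R) (l : nat) : 0 < x -> 0 < z -> z <= x ^ (S l) ->
  Rpower z (/ INR (S l)) <= x.
Proof.
  intros Hx Hz H.
  assert (E : Rpower (x ^ S l) (/ INR (S l)) = x).
  { rewrite <- Rpower_pow by auto. rewrite Rpower_mult. rewrite Rinv_r.
    apply Rpower_1; auto. apply not_0_INR. lia. }
  rewrite <- E at 1. apply Rle_Rpower_l.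
  - left. apply Rinv_0_lt_compat. apply lt_0_INR. lia.
  - split; auto.
Qed.

Lemma root_upper (x z : R) (l : nat) : 0 < x -> x ^ (S l) <= z ->
  x <= Rpower z (/ INR (S l)).
Proof.
  intros Hx H.
  assert (E : Rpower (x ^ S l) (/ INR (S l)) = x).
  { rewrite <- Rpower_pow by auto. rewrite Rpower_mult. rewrite Rinv_r.
    apply Rpower_1; auto. apply not_0_INR. lia. }
  rewrite <- E at 1. apply Rle_Rpower_l.
  - left. apply Rinv_0_lt_compat. apply lt_0_INR. lia.
  - split; auto. apply pow_lt; auto.
Qed.

Lemma Rpower_cn (c : R) (n l : nat) : 0 < c -> (1 <= n)%nat ->
  Rpower (c * INR n ^ l) (/ INR (S l)) =
  Rpower c (/ INR (S l)) * Rpower (INR n) (INR l / INR (S l)).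
Proof.
  intros Hc Hn. assert (HN : 0 < INR n) by (apply lt_0_INR; lia).
  rewrite <- Rpower_mult_distr; auto; [|apply pow_lt; auto].
  f_equal. rewrite <- Rpower_pow by auto. rewrite Rpower_mult. reflexivity.
Qed.

Lemma Rpower_pos (x y : R) : 0 < Rpower x y.
Proof. unfold Rpower. apply exp_pos. Qed.
Lemma urn_mono (l : nat) (a : list nat) (k n : nat) F G0 : (1 <= l)%nat -> (1 <= total a)%nat -> (length a < k)%nat ->
  (forall st, Inv l a k n st -> F st <= G0 st) -> urnE l a n F <= urnE l a n G0.
Proof.
  intros Hl Ha Hk H. unfold urnE. apply (expect_mono l (Inv l a k)).
  - apply Inv_Pres; auto.
  - apply Inv_0; auto.
  - simpl. auto.
Qed.

Lemma urn_lin (l : nat) (a : list nat) (k n : nat) F c0 c1 : (1 <= l)%nat -> (1 <= total a)%nat -> (length a < k)%nat ->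
  urnE l a n (fun st => c0 + c1 * F st) = c0 + c1 * urnE l a n F.
Proof.
  intros Hl Ha Hk. unfold urnE. apply (expect_lin l (Inv l a k)).
  - apply Inv_Pres; auto.
  - apply Inv_0; auto.
Qed.

Lemma jensen_urn (l : nat) (a : list nat) (k n j : nat) : (1 <= l)%nat -> (1 <= total a)%nat -> (length a < k)%nat ->
  ((k - length a) * l <= n)%nat ->
  (urnE l a n (fun st => INR (Mk k st))) ^ (S j) <= urnE l a n (fun st => INR (Mk k st) ^ (S j)).
Proof.
  intros Hl Ha Hk Hn.
  set (mu := urnE l a n (fun st => INR (Mk k st))).
  assert (Hmu : 0 <= mu).
  { unfold mu. rewrite E_M by auto. apply Rmult_le_pos.
    - left. apply Phi_pos; auto. intros. pose proof (Tn_pos l a t Ha). lra.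
    - apply pos_INR. }
  apply Rle_trans with (urnE l a n (fun st => (mu ^ (S j) - INR (S j) * mu ^ j * mu) + (INR (S j) * mu ^ j) * INR (Mk k st))).
  - rewrite (urn_lin l a k) by auto. fold mu. right. ring.
  - apply (urn_mono l a k); auto. intros st _.
    pose proof (tangent mu (INR (Mk k st)) j Hmu (pos_INR _)). lra.
Qed.
Lemma Phi1_bounds (l : nat) (a : list nat) (k : nat) : (1 <= l)%nat -> (1 <= total a)%nat -> (length a < k)%nat ->
  exists c1 C1 N, 0 < c1 /\ 0 < C1 /\ ((k - length a) * l <= N)%nat /\ (1 <= N)%nat /\
    forall n, (N <= n)%nat ->
      c1 * Rpower (INR n) (INR l / INR (S l)) <= Phi 1 l a ((k - length a) * l) n /\
      Phi 1 l a ((k - length a) * l) n <= C1 * Rpower (INR n) (INR l / INR (S l)).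
Proof.
  intros Hl Ha Hk.
  set (n0 := ((k - length a) * l)%nat).
  set (A := INR (total a + S l * (k - length a))).
  assert (HA3 : 3 <= A) by (unfold A; replace 3 with (INR 3) by (simpl; ring); apply le_INR; nia).
  set (beta := INR (S l) / INR l).
  assert (HL : 1 <= INR l) by (apply (le_INR 1); lia).
  assert (Hbeta : 0 < beta) by (unfold beta; apply Rdiv_lt_0_compat; [apply lt_0_INR; lia|lra]).
  destruct (G_asym l a Hl Ha) as [C [HC HG]].
  destruct (INR_archimed 1 (2 * C) ltac:(lra)) as [N1 HN1].
  set (N := (n0 + (total a + l) + N1 + 1)%nat).
  assert (HGn0 : 0 < G l a n0).
  { unfold n0. rewrite G_n0 by auto. fold A. apply Rdiv_lt_0_compat.
    apply rising_pos; lra. pose proof (pos_INR l); lra. }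
  assert (HGb : forall n, (N <= n)%nat ->
    / 2 * (beta ^ l * INR n ^ l) <= G l a n <= 3 / 2 * (beta ^ l * INR n ^ l)).
  { intros n Hn. destruct (HG n ltac:(unfold N in Hn; lia)) as [r [Hr Er]].
    rewrite Er. fold beta. rewrite Rpow_mult_distr.
    assert (Hnpos : 0 < INR n) by (apply lt_0_INR; unfold N in Hn; lia).
    assert (HnN : INR N1 <= INR n) by (apply le_INR; unfold N in Hn; lia).
    assert (HCn : C / INR n <= / 2).
    { apply (Rmult_le_reg_r (INR n)); auto. unfold Rdiv. rewrite Rmult_assoc, Rinv_l by lra. lra. }
    pose proof (Rle_abs r). pose proof (Rle_abs (- r)). rewrite Rabs_Ropp in *.
    assert (0 < INR n ^ l * beta ^ l) by (apply Rmult_lt_0_compat; apply pow_lt; auto).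
    split; nra. }
  set (e := / INR (S l)).
  set (c0 := beta ^ l / (2 * G l a n0)).
  set (C0 := (A + INR l) * (3 / 2) * beta ^ l / A ^ (S l)).
  assert (Hc0 : 0 < c0) by (unfold c0; apply Rdiv_lt_0_compat; [apply pow_lt; auto|lra]).
  assert (HC0 : 0 < C0).
  { unfold C0. apply Rdiv_lt_0_compat; [|apply pow_lt; lra].
    apply Rmult_lt_0_compat; [apply Rmult_lt_0_compat; lra|apply pow_lt; auto]. }
  exists (Rpower c0 e), (Rpower C0 e), N. split; [apply Rpower_pos|]. split; [apply Rpower_pos|].
  split; [unfold N, n0; lia|]. split; [unfold N; lia|].
  intros n Hn.
  assert (Hn1 : (1 <= n)%nat) by (unfold N in Hn; lia).
  assert (Hnn0 : (n0 <= n)%nat) by (unfold N in Hn; lia).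
  assert (Hnpos : 0 < INR n) by (apply lt_0_INR; lia).
  assert (HP1 : 0 < Phi 1 l a n0 n).
  { apply Phi_pos; auto. intros. pose proof (Tn_pos l a t Ha). lra. }
  pose proof (HGb n Hn) as [G1 G2].
  unfold e. rewrite <- !Rpower_cn by auto.
  split.
  - apply root_lower; auto. apply Rmult_lt_0_compat; auto. apply pow_lt; auto.
    apply Rle_trans with (Phi (INR l + 1) l a n0 n); [|apply Phi_pow; auto].
    pose proof (Phi_G l a k n Hl Ha Hk Hnn0) as EG. fold n0 in EG.
    replace (Phi (INR l + 1) l a n0 n) with (G l a n / G l a n0) by (rewrite <- EG; field; lra).
    unfold c0. unfold Rdiv. rewrite Rinv_mult.
    replace (beta ^ l * (/ 2 * / G l a n0) * INR n ^ l) with (/ 2 * (beta ^ l * INR n ^ l) * / G l a n0) by ring.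
    apply Rmult_le_compat_r; [left; apply Rinv_0_lt_compat; auto|lra].
  - apply root_upper; auto.
    pose proof (jensen_urn l a k n l Hl Ha Hk Hnn0) as J.
    rewrite E_M in J by auto. fold n0 A in J.
    assert (J2 : urnE l a n (fun st => INR (Mk k st) ^ S l) <= urnE l a n (fun st => rising (INR (Mk k st)) l)).
    { apply (urn_mono l a k); auto. intros st _. apply rising_bounds, pos_INR. }
    rewrite E_rising_l in J2 by auto. rewrite plus_INR in J2. fold A in J2.
    rewrite Rpow_mult_distr in J.
    assert (HAp : 0 < A ^ S l) by (apply pow_lt; lra).
    unfold C0.
    replace ((A + INR l) * (3 / 2) * beta ^ l / A ^ S l * INR n ^ l) with
      ((A + INR l) * (3 / 2 * (beta ^ l * INR n ^ l)) / A ^ S l) by (field; lra).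
    apply (Rmult_le_reg_r (A ^ S l)); auto.
    unfold Rdiv. rewrite Rmult_assoc, Rinv_l by lra. rewrite Rmult_1_r.
    assert ((A + INR l) * G l a n <= (A + INR l) * (3 / 2 * (beta ^ l * INR n ^ l))) by (apply Rmult_le_compat_l; lra).
    nra.
Qed.
Theorem lemma3p3 (l : nat) (a : list nat) (k q : nat) :
  (1 <= l)%nat ->
  (1 <= length a)%nat ->
  Forall (fun c => (1 <= c)%nat) a ->
  (length a < k)%nat ->
  (1 <= q)%nat ->
  (* (a) E M_k(n)^q is of order n^{q l/(l+1)} *)
  (exists c1 c2 : R, exists N : nat, 0 < c1 /\ 0 < c2 /\
     forall n : nat, (N <= n)%nat ->
       c1 * Rpower (INR n) (INR q * INR l / INR (S l))
         <= urnE l a n (fun st => INR (Mk k st) ^ q)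
       /\ urnE l a n (fun st => INR (Mk k st) ^ q)
         <= c2 * Rpower (INR n) (INR q * INR l / INR (S l)))
  /\
  (* (b) E{M_k(n)(M_k(n)+1)...(M_k(n)+l)}
         = (m_s + (l+1)(k-s) + l) n^l ((l+1)/l)^l (1 + O(1/n)) *)
  (exists C : R, exists N : nat,
     forall n : nat, (N <= n)%nat ->
       exists r : R, Rabs r <= C / INR n /\
         urnE l a n (fun st => rising (INR (Mk k st)) l)
         = INR (list_sum a + S l * (k - length a) + l) * INR n ^ l
           * (INR (S l) / INR l) ^ l * (1 + r))
  /\
  (* (c) limsup E (n^{l/(l+1)} / M_k(n)) < infinity *)
  (exists C : R, exists N : nat,
     forall n : nat, (N <= n)%nat ->
       urnE l a n (fun st => Rpower (INR n) (INR l / INR (S l)) / INR (Mk k st))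
         <= C).
Proof.
  intros Hl Hs Hpos Hk Hq.
  assert (Ha : (1 <= total a)%nat).
  { destruct a as [|x r]; [simpl in Hs; lia|]. inversion Hpos; subst. unfold total; simpl. lia. }
  set (n0 := ((k - length a) * l)%nat).
  set (A := INR (total a + S l * (k - length a))).
  assert (HA3 : 3 <= A) by (unfold A; replace 3 with (INR 3) by (simpl; ring); apply le_INR; nia).
  destruct (Phi1_bounds l a k Hl Ha Hk) as [c1 [C1 [N [Hc1 [HC1 [HNn0 [HN1 HB]]]]]]].
  fold n0 in HNn0, HB.
  set (al := INR l / INR (S l)).
  fold al in HB.
  split; [|split].
  -
    destruct q as [|j]; [lia|].
    exists ((A * c1) ^ S j), (C1 ^ S j * rising A j), N.
    split; [apply pow_lt; nra|]. split.
    { apply Rmult_lt_0_compat; [apply pow_lt; auto|apply rising_pos; lra]. }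
    intros n Hn. destruct (HB n Hn) as [B1 B2].
    assert (Hnn0 : (n0 <= n)%nat) by lia.
    assert (Hna : 0 < Rpower (INR n) al) by apply Rpower_pos.
    assert (EP : Rpower (INR n) (INR (S j) * INR l / INR (S l)) = Rpower (INR n) al ^ S j).
    { rewrite <- Rpower_pow by auto. rewrite Rpower_mult. f_equal. unfold al, Rdiv. ring. }
    rewrite EP.
    split.
    + apply Rle_trans with ((urnE l a n (fun st => INR (Mk k st))) ^ S j).
      * rewrite E_M by auto. fold n0 A. rewrite <- Rpow_mult_distr.
        apply pow_incr. split.
        { apply Rmult_le_pos; [apply Rmult_le_pos|]; lra. }
        assert (A * (c1 * Rpower (INR n) al) <= A * Phi 1 l a n0 n) by (apply Rmult_le_compat_l; lra).
        lra.
      * apply jensen_urn; auto.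
    + apply Rle_trans with (urnE l a n (fun st => rising (INR (Mk k st)) j)).
      * apply (urn_mono l a k); auto. intros st _. apply rising_bounds, pos_INR.
      * rewrite E_rising by auto. fold n0 A.
        assert (HP1 : 0 < Phi 1 l a n0 n).
        { apply Phi_pos; auto. intros. pose proof (Tn_pos l a t Ha). lra. }
        apply Rle_trans with (Phi 1 l a n0 n ^ S j * rising A j).
        { apply Rmult_le_compat_r; [left; apply rising_pos; lra|]. apply Phi_pow; auto. }
        replace (C1 ^ S j * rising A j * Rpower (INR n) al ^ S j) with
          ((C1 * Rpower (INR n) al) ^ S j * rising A j) by (rewrite Rpow_mult_distr; ring).
        apply Rmult_le_compat_r; [left; apply rising_pos; lra|].
        apply pow_incr. split; lra.
  -
    destruct (G_asym l a Hl Ha) as [C [HC HG]].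
    exists C, (n0 + (total a + l))%nat.
    intros n Hn. destruct (HG n ltac:(lia)) as [r [Hr Er]].
    exists r. split; auto.
    rewrite E_rising_l by (auto; unfold n0 in Hn; lia). rewrite Er.
    rewrite Rpow_mult_distr. unfold total. ring.
  -
    exists (/ (c1 * (A - 1))), N.
    intros n Hn. destruct (HB n Hn) as [B1 B2].
    assert (Hnn0 : (n0 <= n)%nat) by lia.
    assert (Hna : 0 < Rpower (INR n) al) by apply Rpower_pos.
    assert (HP1 : 0 < Phi 1 l a n0 n).
    { apply Phi_pos; auto. intros. pose proof (Tn_pos l a t Ha). lra. }
    apply Rle_trans with (urnE l a n (fun st => 0 + Rpower (INR n) al * / (INR (Mk k st) - 1))).
    + apply (urn_mono l a k); auto. intros st [_ [_ H3]].
      specialize (H3 Hnn0).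
      assert (HM : 3 <= INR (Mk k st)).
      { apply Rle_trans with A; auto. unfold A. apply le_INR. auto. }
      rewrite Rplus_0_l. unfold Rdiv. apply Rmult_le_compat_l; [lra|].
      apply Rinv_le_contravar; lra.
    + rewrite (urn_lin l a k) by auto. rewrite E_inv by auto. fold n0 A.
      pose proof (Phi_inv l a k Hl Ha Hk n) as PI. fold n0 in PI.
      assert (HPm : 0 < Phi (-1) l a n0 n).
      { apply Phi_pos; auto. intros. apply (Tn_c l a k); auto; lra. }
      assert (PI2 : Phi (-1) l a n0 n <= / Phi 1 l a n0 n).
      { apply (Rmult_le_reg_r (Phi 1 l a n0 n)); auto. rewrite Rinv_l by lra. lra. }
      assert (PI3 : / Phi 1 l a n0 n <= / (c1 * Rpower (INR n) al)).
      { apply Rinv_le_contravar; auto. nra. }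
      rewrite Rplus_0_l.
      replace (/ (c1 * (A - 1))) with (Rpower (INR n) al * / (c1 * Rpower (INR n) al) * / (A - 1))
        by (field; lra).
      rewrite <- Rmult_assoc.
      apply Rmult_le_compat_r; [left; apply Rinv_0_lt_compat; lra|].
      apply Rmult_le_compat_l; lra.
Qed.
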